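(* Let $A$ be a commutative ring. Then there is an exact sequence of abelian groups $$0\longrightarrow \mathfrak{C}(A)\longrightarrow \mathfrak{C}(A_{\mathrm{red}})\longrightarrow \mathfrak{C}\big(T(A)_{\mathrm{red}},T(A_{\mathrm{red}})\big),$$ where $T(A)_{\mathrm{red}}$ is regarded as a subring of $T(A_{\mathrm{red}})$ via the injective map induced by $a/s\mapsto (a+\mathfrak N)/(s+\mathfrak N)$ ($\mathfrak N$ the nilradical of $A$), the first map is induced by the ring map $T(A)\to T(A_{\mathrm{red}})$, $a/s\mapsto (a+\mathfrak N)/(s+\mathfrak N)$, and the second map is induced by $L\mapsto L\,T(A)_{\mathrm{red}}$ for the tower $A_{\mathrm{red}}\subseteq T(A)_{\mathrm{red}}\subseteq T(A_{\mathrm{red}})$.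
   Context: All rings are commutative with identity; $R_{\mathrm{red}}$ is $R$ modulo its nilradical, and $T(R)$ is the total ring of fractions of $R$. For an extension of rings $R\subseteq S$ and $R$-submodules $L,L'$ of $S$, $LL'$ is the $R$-submodule of finite sums $\sum x_ky_k$. An $R$-submodule $L$ of $S$ is an invertible ideal of $R\subseteq S$ if $LL'=R$ for some $R$-submodule $L'$ of $S$; these form an abelian group $\mathscr{G}(R,S)$ and $\mathfrak{C}(R,S)=\mathscr{G}(R,S)/\{Rx:x\in S^\ast\}$. Also $\mathfrak{C}(R)=\mathfrak{C}(R,T(R))$. A morphism of extensions $\phi:(R,S)\to(R',S')$ (a ring map $\phi:S\to S'$ with $\phi(R)\subseteq R'$) induces $\mathfrak{C}(R,S)\to\mathfrak{C}(R',S')$ via $L\mapsto \phi(L)R'$. *)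

(* Defs.v *)
From HB Require Import structures.
From mathcomp Require Import all_boot all_algebra.
Set Implicit Arguments. Unset Strict Implicit. Unset Printing Implicit Defensive.
Import GRing.Theory.
Local Open Scope ring_scope.

Section Defs.
Variable S : comPzRingType.

Definition seteq (L M : S -> Prop) := forall z, L z <-> M z.

Definition is_unit (x : S) := exists y : S, x * y = 1.

Definition submod (R L : S -> Prop) :=
  [/\ L 0, (forall x y, L x -> L y -> L (x + y)) &
      (forall r x, R r -> L x -> L (r * x))].

Definition prodset (L M : S -> Prop) : S -> Prop :=
  fun z => exists s : seq (S * S),
    (forall p, p \in s -> L p.1 /\ M p.2) /\ z = \sum_(p <- s) p.1 * p.2.

Definition invertible (R L : S -> Prop) :=
  submod R L /\ exists L', submod R L' /\ seteq (prodset L L') R.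

(* L and M have the same class modulo principal invertible ideals R x, x \in S^* *)
Definition same_class (L M : S -> Prop) :=
  exists x, is_unit x /\ seteq L (fun z => exists m, M m /\ z = x * m).

Definition principal (R L : S -> Prop) := same_class L R.

Definition regular (s : S) := forall a, s * a = 0 -> a = 0.
End Defs.

Definition rng {T U : Type} (f : T -> U) : U -> Prop := fun y => exists x, y = f x.
Definition imset {T U : Type} (f : T -> U) (L : T -> Prop) : U -> Prop :=
  fun y => exists x, L x /\ y = f x.

Definition ext_map {S S' : comPzRingType} (phi : S -> S') (R' : S' -> Prop)
  (L : S -> Prop) : S' -> Prop := prodset (imset phi L) R'.

Definition total_frac {A T : comPzRingType} (i : A -> T) :=
  [/\ injective i, (forall s, regular s -> is_unit (i s)) &
      (forall t, exists a s, regular s /\ t * i s = i a)].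

Definition reduction {A B : comPzRingType} (pi : A -> B) :=
  (forall b, exists a, b = pi a) /\
  (forall a, pi a = 0 <-> exists n, a ^+ n = 0).

(* F induces a well-defined group homomorphism C(R,S) -> C(R',S') *)
Definition class_hom {S S' : comPzRingType} (R : S -> Prop) (R' : S' -> Prop)
  (F : (S -> Prop) -> (S' -> Prop)) :=
  [/\ (forall L, invertible R L -> invertible R' (F L)),
      (forall L M, invertible R L -> invertible R M -> same_class L M ->
         same_class (F L) (F M)) &
      (forall L M, invertible R L -> invertible R M ->
         same_class (F (prodset L M)) (prodset (F L) (F M)))].

Definition exact_0_C_C_C {S1 S2 S3 : comPzRingType}
  (R1 : S1 -> Prop) (R2 : S2 -> Prop) (R3 : S3 -> Prop)
  (F1 : (S1 -> Prop) -> (S2 -> Prop)) (F2 : (S2 -> Prop) -> (S3 -> Prop)) :=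
  [/\ (forall L, invertible R1 L -> principal R2 (F1 L) -> principal R1 L),
      (forall L, invertible R1 L -> principal R3 (F2 (F1 L))) &
      (forall L, invertible R2 L -> principal R3 (F2 L) ->
         exists L0, invertible R1 L0 /\ same_class L (F1 L0))].

(* Main.v *)
Require Import Defs.
From HB Require Import structures.
From mathcomp Require Import all_boot all_algebra ring.
From Stdlib Require Import FunctionalExtensionality PropExtensionality ClassicalEpsilon.
Set Implicit Arguments. Unset Strict Implicit. Unset Printing Implicit Defensive.
Import GRing.Theory.
Local Open Scope ring_scope.

Lemma pext (T : Type) (L M : T -> Prop) : (forall z, L z <-> M z) -> L = M.
Proof.
move=> h; apply: functional_extensionality => z; apply: propositional_extensionality; exact: h.
Qed.

Section Prodset.
Variable S : comPzRingType.
Implicit Types L M N R Q : S -> Prop.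

Definition scale (c : S) L : S -> Prop := fun z => exists m, L m /\ z = c * m.

Definition subring R :=
  [/\ R 1, R 0, (forall x y, R x -> R y -> R (x + y)),
      (forall x y, R x -> R y -> R (x * y)) & (forall x, R x -> R (- x))].

Lemma prodset_ind L M Q : Q 0 -> (forall a b, Q a -> Q b -> Q (a + b)) ->
  (forall x y, L x -> M y -> Q (x * y)) -> forall z, prodset L M z -> Q z.
Proof.
move=> Q0 QD QM z [s [hs ->]].
elim: s hs => [|p s IH] hs; first by rewrite big_nil.
rewrite big_cons; apply: QD.
  have [h1 h2] := hs p (mem_head _ _); exact: QM.
by apply: IH => q qs; apply: hs; rewrite in_cons qs orbT.
Qed.

Lemma prodset0 L M : prodset L M 0.
Proof. by exists [::]; split => //; rewrite big_nil. Qed.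

Lemma prodsetD L M a b : prodset L M a -> prodset L M b -> prodset L M (a + b).
Proof.
move=> [s1 [h1 ->]] [s2 [h2 ->]]; exists (s1 ++ s2); split; last by rewrite big_cat.
by move=> p; rewrite mem_cat => /orP [] ?; [apply: h1|apply: h2].
Qed.

Lemma prodsetM1 L M x y : L x -> M y -> prodset L M (x * y).
Proof.
move=> hx hy; exists [:: (x, y)]; split; last by rewrite big_seq1.
by move=> p; rewrite inE => /eqP ->.
Qed.

Lemma prodset_sum L M (I : Type) (r : seq I) (P : pred I) (F : I -> S) :
  (forall i, P i -> prodset L M (F i)) -> prodset L M (\sum_(i <- r | P i) F i).
Proof.
move=> h; apply: (big_ind (prodset L M)) => //; [exact: prodset0|exact: prodsetD].
Qed.

Lemma prodset_mono L L' M M' : (forall z, L z -> L' z) -> (forall z, M z -> M' z) ->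
  forall z, prodset L M z -> prodset L' M' z.
Proof.
move=> hL hM; apply: prodset_ind; [exact: prodset0|exact: prodsetD|].
by move=> x y hx hy; apply: prodsetM1; auto.
Qed.

Lemma prodsetC L M : prodset L M = prodset M L.
Proof.
suff h : forall L M z, prodset L M z -> prodset M L z by apply: pext => z; split; apply: h.
move=> L1 M1; apply: prodset_ind; [exact: prodset0|exact: prodsetD|].
by move=> x y hx hy; rewrite mulrC; apply: prodsetM1.
Qed.

Lemma prodset_submodl R L M : submod R L -> submod R (prodset L M).
Proof.
move=> [L0 LD LM]; split; [exact: prodset0|exact: prodsetD|].
move=> r z hr; move: z; apply: prodset_ind.
- by rewrite mulr0; exact: prodset0.
- by move=> a b ha hb; rewrite mulrDr; apply: prodsetD.
- by move=> x y hx hy; rewrite mulrA; apply: prodsetM1 => //; apply: LM.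
Qed.

Lemma prodset_submodr R L M : submod R M -> submod R (prodset L M).
Proof. by rewrite prodsetC; apply: prodset_submodl. Qed.

Lemma subring_submod R : subring R -> submod R R.
Proof. by case=> ? ? ? ? ?; split. Qed.

Lemma prodset_R R L : subring R -> submod R L -> prodset L R = L.
Proof.
move=> hR [L0 LD LM]; have [R1 _ _ _ _] := hR.
apply: pext => z; split.
- move: z; apply: prodset_ind => // x y hx hy; rewrite mulrC; exact: LM.
- by move=> hz; rewrite -[z]mulr1; apply: prodsetM1.
Qed.

Lemma prodsetA L M N : prodset (prodset L M) N = prodset L (prodset M N).
Proof.
apply: pext => z; split.
- move: z; apply: prodset_ind; [exact: prodset0|exact: prodsetD|].
  move=> u n hu hn; move: u hu; apply: prodset_ind.
  + by rewrite mul0r; exact: prodset0.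
  + by move=> a b ha hb; rewrite mulrDl; apply: prodsetD.
  + by move=> x y hx hy; rewrite -mulrA; apply: prodsetM1 => //; apply: prodsetM1.
- move: z; apply: prodset_ind; [exact: prodset0|exact: prodsetD|].
  move=> x u hx hu; move: u hu; apply: prodset_ind.
  + by rewrite mulr0; exact: prodset0.
  + by move=> a b ha hb; rewrite mulrDr; apply: prodsetD.
  + by move=> y n hy hn; rewrite mulrA; apply: prodsetM1 => //; apply: prodsetM1.
Qed.

Lemma prodset_scale c L M : prodset (scale c L) M = scale c (prodset L M).
Proof.
apply: pext => z; split.
- move: z; apply: prodset_ind.
  + by exists 0; split; [exact: prodset0| rewrite mulr0].
  + move=> a b [m1 [h1 ->]] [m2 [h2 ->]]; exists (m1 + m2); split; last by rewrite mulrDr.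
    exact: prodsetD.
  + move=> x y [m [hm ->]] hy; exists (m * y); split; last by rewrite mulrA.
    exact: prodsetM1.
- move=> [m [hm ->]]; move: m hm; apply: prodset_ind.
  + by rewrite mulr0; exact: prodset0.
  + by move=> a b ha hb; rewrite mulrDr; apply: prodsetD.
  + move=> x y hx hy; rewrite mulrA; apply: prodsetM1 => //; by exists x.
Qed.

Lemma scale1 L : scale 1 L = L.
Proof.
apply: pext => z; split; first by move=> [m [hm ->]]; rewrite mul1r.
by move=> hz; exists z; rewrite mul1r.
Qed.

Lemma scaleM c d L : scale c (scale d L) = scale (c * d) L.
Proof.
apply: pext => z; split.
- by move=> [m [[n [hn ->]] ->]]; exists n; rewrite mulrA.
- by move=> [n [hn ->]]; exists (d * n); split; [exists n|rewrite mulrA].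
Qed.

Lemma seteqE L M : seteq L M -> L = M.
Proof. exact: pext. Qed.

End Prodset.

Section Imset.
Variables (S S' : comPzRingType) (phi : {rmorphism S -> S'}).

Lemma imset_prodset (L M : S -> Prop) :
  Defs.imset (phi : S -> S') (prodset L M) = prodset (Defs.imset (phi : S -> S') L) (Defs.imset (phi : S -> S') M).
Proof.
apply: pext => z; split.
- move=> [m [hm ->]]; move: m hm; apply: prodset_ind.
  + by rewrite rmorph0; exact: prodset0.
  + by move=> a b ha hb; rewrite rmorphD; apply: prodsetD.
  + by move=> x y hx hy; rewrite rmorphM; apply: prodsetM1; [exists x|exists y].
- move: z; apply: prodset_ind.
  + by exists 0; rewrite rmorph0; split => //; exact: prodset0.
  + move=> a b [m1 [h1 ->]] [m2 [h2 ->]]; exists (m1 + m2); rewrite rmorphD; split => //.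
    exact: prodsetD.
  + move=> _ _ [x [hx ->]] [y [hy ->]]; exists (x * y); rewrite rmorphM; split => //.
    exact: prodsetM1.
Qed.

Lemma imset_scale c (L : S -> Prop) : Defs.imset (phi : S -> S') (scale c L) = scale (phi c) (Defs.imset (phi : S -> S') L).
Proof.
apply: pext => z; split.
- by move=> [_ [[m [hm ->]] ->]]; exists (phi m); rewrite rmorphM; split => //; exists m.
- by move=> [_ [[m [hm ->]] ->]]; exists (c * m); rewrite rmorphM; split => //; exists m.
Qed.

Lemma is_unit_rmorph x : is_unit x -> is_unit (phi x).
Proof. by move=> [y hy]; exists (phi y); rewrite -rmorphM hy rmorph1. Qed.

Variables (R : S -> Prop) (R' : S' -> Prop).
Hypotheses (hR : subring R) (hR' : subring R') (hRR : forall r, R r -> R' (phi r)).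

Lemma prodset_imR : prodset (Defs.imset (phi : S -> S') R) R' = R'.
Proof.
have [R1 R0 RD RM RN] := hR'; have [r1 _ _ _ _] := hR.
apply: pext => z; split.
- move: z; apply: prodset_ind => // _ y [x [hx ->]] hy; apply: RM => //; exact: hRR.
- move=> hz; rewrite -[z]mul1r; apply: prodsetM1 => //; exists 1; by rewrite rmorph1.
Qed.

Lemma ext_map_class_hom : class_hom R R' (ext_map (phi : S -> S') R').
Proof.
have sR' := subring_submod hR'.
have RR : prodset R' R' = R' by apply: prodset_R.
have key : forall X Y : S' -> Prop,
    prodset (prodset X R') (prodset Y R') = prodset (prodset X Y) R'.
  move=> X Y; rewrite prodsetA -[prodset R' (prodset Y R')]prodsetA
     [prodset R' Y]prodsetC prodsetA RR -prodsetA //.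
have FM : forall L M, ext_map (phi : S -> S') R' (prodset L M) =
                      prodset (ext_map (phi : S -> S') R' L) (ext_map (phi : S -> S') R' M).
  by move=> L M; rewrite /ext_map key imset_prodset.
split.
- move=> L [sL [L' [sL' e]]]; split; first exact: prodset_submodr.
  exists (ext_map (phi : S -> S') R' L'); split; first exact: prodset_submodr.
  move=> z; rewrite -FM (seteqE e) /ext_map prodset_imR //.
- move=> L M _ _ [x [ux e]]; exists (phi x); split; first exact: is_unit_rmorph.
  move=> z; rewrite (seteqE e) /ext_map -/(scale x M) imset_scale prodset_scale //.
- move=> L M _ _; exists 1; split; first by exists 1; rewrite mulr1.
  move=> z; rewrite FM; split; first by move=> h; exists z; rewrite mul1r.
  by move=> [m [hm ->]]; rewrite mul1r.
Qed.

End Imset.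

Section J.
Variables (A : comPzRingType) (T : finType) (g : T -> A).

Definition mono (e : {ffun T -> nat}) := \prod_q g q ^+ e q.
Definition J m x := exists s : seq (A * {ffun T -> nat}),
  (forall t, t \in s -> m <= \sum_q t.2 q)%N /\ x = \sum_(t <- s) t.1 * mono t.2.

Lemma J0 m : J m 0.
Proof. by exists [::]; rewrite big_nil. Qed.

Lemma JD m x y : J m x -> J m y -> J m (x + y).
Proof.
move=> [s1 [h1 ->]] [s2 [h2 ->]]; exists (s1 ++ s2); rewrite big_cat; split => //.
by move=> t; rewrite mem_cat => /orP [] ?; [apply: h1|apply: h2].
Qed.

Lemma Jsum m (I : Type) (r : seq I) (P : pred I) (F : I -> A) :
  (forall i, P i -> J m (F i)) -> J m (\sum_(i <- r | P i) F i).
Proof. by move=> h; apply: (big_ind (J m)) => //; [exact: J0|exact: JD]. Qed.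

Lemma J1 m c (e : {ffun T -> nat}) : (m <= \sum_q e q)%N -> J m (c * mono e).
Proof. by move=> h; exists [:: (c, e)]; rewrite big_seq1; split => // t; rewrite inE => /eqP ->. Qed.

Lemma monoD e e' : mono e * mono e' = mono [ffun q => (e q + e' q)%N].
Proof. by rewrite /mono -big_split; apply: eq_bigr => q _; rewrite ffunE exprD. Qed.

Lemma JM a b x y : J a x -> J b y -> J (a + b) (x * y).
Proof.
move=> [s1 [h1 ->]] [s2 [h2 ->]]; rewrite big_distrl big_seq; apply: Jsum => t ts.
rewrite big_distrr big_seq; apply: Jsum => t' ts'.
change (J (a + b) (t.1 * mono t.2 * (t'.1 * mono t'.2))).
have -> : t.1 * mono t.2 * (t'.1 * mono t'.2) = (t.1 * t'.1) * (mono t.2 * mono t'.2).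
  by rewrite -!mulrA; congr (_ * _); rewrite mulrCA.
rewrite monoD; apply: J1.
rewrite (eq_bigr (fun q => t.2 q + t'.2 q)%N); last by move=> q _; rewrite ffunE.
by rewrite big_split /= leq_add // ?h1 ?h2.
Qed.


Lemma J0any c : J 0 c.
Proof.
have -> : c = c * mono [ffun=> 0%N].
  by rewrite /mono big1 ?mulr1 // => q _; rewrite ffunE expr0.
exact: J1.
Qed.

Lemma Jmull m c x : J m x -> J m (c * x).
Proof. by move=> h; have := JM (J0any c) h. Qed.

Lemma Jmulr m c x : J m x -> J m (x * c).
Proof. by rewrite mulrC; apply: Jmull. Qed.

Lemma JN m x : J m x -> J m (- x).
Proof. by move=> h; rewrite -mulN1r; apply: Jmull. Qed.

Lemma JB m x y : J m x -> J m y -> J m (x - y).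
Proof. by move=> hx hy; apply: JD => //; apply: JN. Qed.

Lemma JMn m x k : J m x -> J m (x *+ k).
Proof. by move=> h; elim: k => [|k IH]; [rewrite mulr0n; exact: J0|rewrite mulrS; apply: JD]. Qed.

Lemma Jle m k x : (k <= m)%N -> J m x -> J k x.
Proof.
move=> km [s [hs ->]]; exists s; split => // t ts; exact: leq_trans km (hs t ts).
Qed.

Lemma Jg q : J 1 (g q).
Proof.
pose e : {ffun T -> nat} := [ffun q' => nat_of_bool (q' == q)].
have -> : g q = 1 * mono e.
  rewrite mul1r /mono (bigD1 q) //= ffunE eqxx expr1 big1 ?mulr1 // => q' /negbTE nq.
  by rewrite ffunE nq expr0.
apply: J1; rewrite (bigD1 q) //= ffunE eqxx; exact: leq_addr.
Qed.

Lemma Jzero p m x : (forall q, g q ^+ p = 0) -> (#|T| * p < m)%N -> J m x -> x = 0.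
Proof.
move=> gp hm [s [hs ->]]; rewrite big_seq big1 // => t ts.
have [q hq] : exists q, (p <= t.2 q)%N.
  case: (pickP (fun q => p <= t.2 q)%N) => [q hq|h]; first by exists q.
  exfalso.
  have hsum : (\sum_q t.2 q <= \sum_(q : T) p)%N.
    by apply: leq_sum => q _; apply: ltnW; rewrite ltnNge h.
  rewrite sum_nat_const in hsum.
  have := leq_trans (hs t ts) hsum => hm2.
  by have := leq_ltn_trans hm2 hm; rewrite ltnn.
by rewrite /mono (bigD1 q) //= -(subnK hq) exprD gp !(mulr0, mul0r).
Qed.

End J.

Section MJ.
Variables (A : comPzRingType) (T : finType) (g : T -> A).
Definition MJ m k l (X : 'M[A]_(k, l)) := forall a b, J g m (X a b).

Lemma MJM m1 m2 k l r (X : 'M[A]_(k, l)) (Y : 'M[A]_(l, r)) :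
  MJ m1 X -> MJ m2 Y -> MJ (m1 + m2) (X *m Y).
Proof. by move=> hX hY a b; rewrite mxE; apply: Jsum => j _; apply: JM. Qed.

Lemma MJmulr m k l r (X : 'M[A]_(k, l)) (W : 'M[A]_(l, r)) : MJ m X -> MJ m (X *m W).
Proof. by move=> hX a b; rewrite mxE; apply: Jsum => j _; apply: Jmulr. Qed.

Lemma MJmull m k l r (W : 'M[A]_(k, l)) (X : 'M[A]_(l, r)) : MJ m X -> MJ m (W *m X).
Proof. by move=> hX a b; rewrite mxE; apply: Jsum => j _; apply: Jmull. Qed.

Lemma MJle m m' k l (X : 'M[A]_(k, l)) : (m' <= m)%N -> MJ m X -> MJ m' X.
Proof. by move=> h hX a b; apply: Jle (hX a b). Qed.

End MJ.

Section Newton.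
Variable A : comPzRingType.
Definition newt n (C : 'M[A]_n) := (C *m C) *+ 3 - (C *m C *m C) *+ 2.
Definition zz n (C : 'M[A]_n) := C *m C - C.
End Newton.

Section NZ.
Variable A : comPzRingType.
Hypothesis h : (1:A) != 0.
Definition nzA : Type := A.
HB.instance Definition _ := GRing.ComPzRing.on nzA.
HB.instance Definition _ := GRing.PzSemiRing_isNonZero.Build nzA h.

Lemma newt_z_nz n (C : 'M[nzA]_n.+1) :
  zz (newt C) = zz C *m zz C *m (zz C *+ 4 - 1%:M *+ 3).
Proof.
rewrite /zz /newt !mulmxE.
pose p : {poly nzA} := 'X.
have e : let z := p * p - p in let N := (p * p) *+ 3 - p * p * p *+ 2 in
  N * N - N = z * z * (z *+ 4 - 1 *+ 3).
  rewrite /=. ring.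
pose f : {rmorphism {poly nzA} -> 'M[nzA]_n.+1} := horner_mx C.
have hX : f 'X = C := horner_mx_X C.
move: (congr1 f e) => /=. rewrite /p !(rmorphM, rmorphB, rmorphMn, rmorph1) hX. by [].
Qed.
End NZ.

Lemma newt_z (A : comPzRingType) n (C : 'M[A]_n) :
  zz (newt C) = zz C *m zz C *m (zz C *+ 4 - 1%:M *+ 3).
Proof.
have [h0|h] := eqVneq (1 : A) 0.
  have all0 : forall x : A, x = 0 by move=> x; rewrite -[x]mulr1 h0 mulr0.
  by apply/matrixP => a b; rewrite (all0 (_ a b)) (all0 (_ a b)).
case: n C => [|n] C; first by rewrite !thinmx0.
exact: (@newt_z_nz A h n C).
Qed.

Lemma idem_lift (A B : comPzRingType) (pi : {rmorphism A -> B})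
  (nil : forall a, pi a = 0 -> exists k, a ^+ k = 0) n (C : 'M[A]_n) :
  map_mx pi (C *m C) = map_mx pi C ->
  exists E : 'M[A]_n, E *m E = E /\ map_mx pi E = map_mx pi C.
Proof.
move=> hQ.
pose g (q : 'I_n * 'I_n) := zz C q.1 q.2.
have g0 : forall q, pi (g q) = 0.
  move=> q; have := congr1 (fun M : 'M[B]_n => M q.1 q.2) hQ.
  rewrite /= !mxE => e; rewrite /g /zz !mxE rmorphB /= e subrr //.
have /fin_all_exists [k hk] : forall q : 'I_n * 'I_n, exists kq : nat, g q ^+ kq = 0.
  by move=> q; apply: nil.
pose p := (\sum_q k q)%N.
have gp : forall q, g q ^+ p = 0.
  by move=> q; rewrite /p (bigD1 q) //= exprD hk mul0r.
pose it t := iter t (@newt A n) C.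
have I1 : forall t, map_mx pi (it t) = map_mx pi C.
  elim=> [//|t IH]; rewrite /= /newt map_mxB !raddfMn /= !map_mxM -/(it t) IH -map_mxM hQ.
  by rewrite -map_mxM hQ [_ *+ 3]mulrS -addrA ?mulNrn subrr addr0.
have I2 : forall t, MJ g (2 ^ t) (zz (it t)).
  elim=> [|t IH].
    by move=> a b; have := Jg g (a, b).
  rewrite /= newt_z -/(it t) expnS mul2n -addnn; apply: MJmulr; exact: MJM.
pose t := (#|{: 'I_n * 'I_n}| * p)%N.
exists (it t); split; last exact: I1.
apply/eqP; rewrite -subr_eq0; apply/eqP/matrixP => a b; rewrite [RHS]mxE.
apply: (Jzero gp _ (I2 t a b)); exact: ltn_expl.
Qed.

Section Psi.
Variables (A TA B TB : comPzRingType) (i : {rmorphism A -> TA})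
  (pi : {rmorphism A -> B}) (j : {rmorphism B -> TB}).
Hypotheses (hi : total_frac i) (hpi : reduction pi) (hj : total_frac j).

Lemma regM (S : comPzRingType) (x y : S) : regular x -> regular y -> regular (x * y).
Proof. by move=> hx hy a; rewrite -mulrA => /hx /hy. Qed.

Lemma reg1 (S : comPzRingType) : regular (1 : S).
Proof. by move=> a; rewrite mul1r. Qed.

Lemma regX (S : comPzRingType) (x : S) n : regular x -> regular (x ^+ n).
Proof. by move=> hx; elim: n => [|n IH]; [rewrite expr0; exact: reg1|rewrite exprS; apply: regM]. Qed.

Lemma regular_pi s : regular s -> regular (pi s).
Proof.
move=> hs b; have [a ->] := hpi.1 b; rewrite -rmorphM => /hpi.2 [n hn].
apply/hpi.2; exists n; have := @regX _ s n hs (a ^+ n); rewrite -exprMn; exact.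
Qed.

Lemma unit_jpi s : regular s -> is_unit (j (pi s)).
Proof. by move=> hs; case: hj => _ hu _; apply: hu; apply: regular_pi. Qed.

Lemma psi_data t : exists p : A * A * TB,
  [/\ regular p.1.2, t * i p.1.2 = i p.1.1 & j (pi p.1.2) * p.2 = 1].
Proof.
case: hi => _ _ h; have [a [s [hs e]]] := h t; have [u hu] := unit_jpi hs.
by exists (a, s, u).
Qed.

Definition psi_fun (t : TA) : TB :=
  let p := proj1_sig (constructive_indefinite_description _ (psi_data t)) in
  j (pi p.1.1) * p.2.

Lemma psi_spec t a s u : regular s -> t * i s = i a -> j (pi s) * u = 1 ->
  psi_fun t = j (pi a) * u.
Proof.
move=> hs e hu; rewrite /psi_fun.
case: (constructive_indefinite_description _ _) => [[[a0 s0] u0] /= [hs0 e0 hu0]].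
have ea : a * s0 = a0 * s.
  case: hi => hinj _ _; apply: hinj; rewrite !rmorphM -e -e0; by rewrite mulrAC.
have -> : j (pi a0) * u0 = j (pi (a0 * s)) * u0 * u.
  by rewrite !rmorphM -[LHS]mulr1 -hu; move: (j (pi a0)) (j (pi s)) => x y; ring.
by rewrite -ea !rmorphM -[RHS]mulr1 -hu0; move: (j (pi a)) (j (pi s0)) => x y; ring.
Qed.

Lemma psi_i a : psi_fun (i a) = j (pi a).
Proof.
rewrite (@psi_spec (i a) a 1 1) ?rmorph1 ?mulr1 //; exact: reg1.
Qed.

Lemma psi_1 : psi_fun 1 = 1.
Proof. by rewrite -(rmorph1 i) psi_i !rmorph1. Qed.

Lemma psiB : zmod_morphism psi_fun.
Proof.
move=> t1 t2.
have [[[a1 s1] u1] [/= h1 e1 k1]] := psi_data t1.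
have [[[a2 s2] u2] [/= h2 e2 k2]] := psi_data t2.
rewrite (psi_spec h1 e1 k1) (psi_spec h2 e2 k2).
rewrite (@psi_spec (t1 - t2) (a1 * s2 - a2 * s1) (s1 * s2) (u1 * u2)).
- rewrite !(rmorphB, rmorphM); move: k1 k2; move: (j (pi a1)) (j (pi a2)) (j (pi s1)) (j (pi s2)).
  move=> x1 x2 y1 y2 k1 k2.
  transitivity (x1 * u1 * (y2 * u2) - x2 * u2 * (y1 * u1)); first by ring.
  by rewrite k1 k2 !mulr1.
- exact: regM.
- rewrite !(rmorphB, rmorphM) -e1 -e2; move: (i s1) (i s2) => y1 y2; ring.
- rewrite !rmorphM; move: k1 k2; move: (j (pi s1)) (j (pi s2)) => y1 y2 k1 k2.
  by rewrite mulrACA k1 k2 mulr1.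
Qed.

Lemma psiM : monoid_morphism psi_fun.
Proof.
split; first exact: psi_1.
move=> t1 t2.
have [[[a1 s1] u1] [/= h1 e1 k1]] := psi_data t1.
have [[[a2 s2] u2] [/= h2 e2 k2]] := psi_data t2.
rewrite (psi_spec h1 e1 k1) (psi_spec h2 e2 k2).
rewrite (@psi_spec (t1 * t2) (a1 * a2) (s1 * s2) (u1 * u2)).
- by rewrite !rmorphM mulrACA.
- exact: regM.
- by rewrite !rmorphM -e1 -e2 mulrACA.
- rewrite !rmorphM; move: k1 k2; move: (j (pi s1)) (j (pi s2)) => y1 y2 k1 k2.
  by rewrite mulrACA k1 k2 mulr1.
Qed.

Lemma psi_exists : exists psi : {rmorphism TA -> TB}, forall a, psi (i a) = j (pi a).
Proof.
pose psi : {rmorphism TA -> TB} := HB.pack psi_fun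
  (GRing.isZmodMorphism.Build _ _ psi_fun psiB) (GRing.isMonoidMorphism.Build _ _ psi_fun psiM).
by exists psi => a; exact: psi_i.
Qed.

End Psi.

Lemma rng_subring (S S' : comPzRingType) (f : {rmorphism S -> S'}) : subring (rng (f : S -> S')).
Proof.
split.
- by exists 1; rewrite rmorph1.
- by exists 0; rewrite rmorph0.
- by move=> _ _ [x ->] [y ->]; exists (x + y); rewrite rmorphD.
- by move=> _ _ [x ->] [y ->]; exists (x * y); rewrite rmorphM.
- by move=> _ [x ->]; exists (- x); rewrite rmorphN.
Qed.

Lemma unit_of_nil (S : comPzRingType) (t : S) n : (1 - t) ^+ n = 0 -> is_unit t.
Proof.
move=> h; exists (\sum_(k < n) (1 - t) ^+ k).
have := subrX1 (1 - t) n; rewrite h sub0r.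
have -> : 1 - t - 1 = - t by rewrite addrAC subrr add0r.
by rewrite mulNr => /eqP; rewrite eqr_opp => /eqP <-.
Qed.

Lemma submod_sum (S : comPzRingType) (R L : S -> Prop) (I : Type) (r : seq I) (P : pred I) F :
  submod R L -> (forall k, P k -> L (F k)) -> L (\sum_(k <- r | P k) F k).
Proof. by case=> L0 LD _ h; apply: big_ind. Qed.

Section Main.
Variables (A TA B TB : comPzRingType) (i : {rmorphism A -> TA})
  (pi : {rmorphism A -> B}) (j : {rmorphism B -> TB}).
Hypotheses (hi : total_frac i) (hpi : reduction pi) (hj : total_frac j).
Variable psi : {rmorphism TA -> TB}.
Hypothesis hpsi : forall a, psi (i a) = j (pi a).

Lemma i_inj : injective i. Proof. by case: hi. Qed.
Lemma j_inj : injective j. Proof. by case: hj. Qed.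

Lemma rng_j_psi z : rng j z -> rng psi z.
Proof. by move=> [b ->]; have [a ->] := hpi.1 b; exists (i a); rewrite hpsi. Qed.

Lemma psi_nil t : psi t = 0 -> exists n, t ^+ n = 0.
Proof.
move=> h; case: hi => _ hu hfr; have [a [s [hs e]]] := hfr t.
have : j (pi a) = 0 by rewrite -hpsi -e rmorphM h mul0r.
rewrite -(rmorph0 j) => /j_inj /hpi.2 [n hn]; exists n.
have [w hw] := hu _ hs.
by rewrite -[t ^+ n]mulr1 -(expr1n _ n) -hw exprMn mulrA -exprMn e -rmorphXn hn rmorph0 !mul0r.
Qed.

Lemma psi_unit t : psi t = 1 -> is_unit t.
Proof.
move=> h; have [n hn] : exists n, (1 - t) ^+ n = 0 by apply: psi_nil; rewrite rmorphB rmorph1 h subrr.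
exact: unit_of_nil hn.
Qed.

Lemma pi_unit a : pi a = 1 -> is_unit a.
Proof.
move=> h; have [n hn] : exists n, (1 - a) ^+ n = 0 by apply/hpi.2; rewrite rmorphB rmorph1 h subrr.
exact: unit_of_nil hn.
Qed.

Lemma F1_hom : class_hom (rng i) (rng j) (ext_map psi (rng j)).
Proof.
apply: ext_map_class_hom; try exact: rng_subring.
by move=> _ [a ->]; rewrite hpsi; exists (pi a).
Qed.

Lemma F2_hom : class_hom (rng j) (rng psi) (fun L : TB -> Prop => prodset L (rng psi)).
Proof.
have e : (fun L : TB -> Prop => prodset L (rng psi)) = ext_map (idfun : {rmorphism TB -> TB}) (rng psi).
  apply: functional_extensionality => L; rewrite /ext_map; congr prodset.
  by apply: pext => z; split; [move=> h; exists z|move=> [x [hx ->]]].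
rewrite e; apply: ext_map_class_hom; try exact: rng_subring.
exact: rng_j_psi.
Qed.

Lemma exact1 L : invertible (rng i) L -> principal (rng j) (ext_map psi (rng j) L) ->
  principal (rng i) L.
Proof.
move=> [sL [L' [sL' eLL']]] [u [hu eu]].
have E := seteqE eLL'; have EU := seteqE eu.
case: (sL) => L0 LD LM; case: (sL') => L'0 L'D L'M.
have psiL : forall x, L x -> exists a, psi x = u * psi (i a).
  move=> x hx; have : ext_map psi (rng j) L (psi x).
    by rewrite -[psi x]mulr1; apply: prodsetM1; [exists x|exists 1; rewrite rmorph1].
  rewrite EU => [[_ [[b ->] ->]]]; have [a ->] := hpi.1 b; by exists a; rewrite hpsi.
have F1L : forall z, ext_map psi (rng j) L z -> exists x, L x /\ z = psi x.
  apply: prodset_ind.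
  - by exists 0; rewrite rmorph0.
  - by move=> _ _ [x1 [h1 ->]] [x2 [h2 ->]]; exists (x1 + x2); rewrite rmorphD; split => //; apply: LD.
  - move=> _ _ [x [hx ->]] [b ->]; have [a ->] := hpi.1 b.
    exists (i a * x); split; first by apply: LM => //; exists a.
    by rewrite rmorphM hpsi mulrC.
have [x0 [hx0 ex0]] : exists x0, L x0 /\ u = psi x0.
  apply: F1L; rewrite EU; exists 1; split; [by exists 1; rewrite rmorph1|by rewrite mulr1].
have Q : forall z, prodset L L' z -> exists y, L' y /\ psi z = u * psi y.
  apply: prodset_ind.
  - by exists 0; rewrite !rmorph0 mulr0.
  - move=> z1 z2 [y1 [h1 e1]] [y2 [h2 e2]]; exists (y1 + y2); split; first exact: L'D.
    by rewrite !rmorphD e1 e2 mulrDr.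
  - move=> x y hx hy; have [a ea] := psiL x hx; exists (i a * y); split.
      by apply: L'M => //; exists a.
    by rewrite !rmorphM ea mulrA.
have : prodset L L' 1 by rewrite E; exists 1; rewrite rmorph1.
move=> /Q [y0 [hy0 ey0]]; rewrite rmorph1 in ey0.
have : prodset L L' (x0 * y0) by apply: prodsetM1.
rewrite E => -[a ea].
have pa : pi a = 1.
  by apply: j_inj; rewrite -hpsi -ea rmorphM -ex0 -ey0 rmorph1.
have [b hab] := pi_unit pa.
exists x0; split.
  by exists (y0 * i b); rewrite mulrA ea -rmorphM hab rmorph1.
move=> x; split.
- move=> hx; have : prodset L L' (x * y0) by apply: prodsetM1.
  rewrite E => -[c hc]; exists (i (c * b)); split; first by exists (c * b).
  rewrite rmorphM -hc.
  have hab' : i a * i b = 1 by rewrite -rmorphM hab rmorph1.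
  rewrite -ea in hab'.
  transitivity (x * (x0 * y0 * i b)); first by rewrite hab' mulr1.
  by move: (i b) => ib; ring.
- by move=> [_ [[c ->] ->]]; rewrite mulrC; apply: LM => //; exists c.
Qed.

Lemma exact2 L : invertible (rng i) L ->
  principal (rng psi) (prodset (ext_map psi (rng j) L) (rng psi)).
Proof.
move=> [sL [L' [sL' eLL']]]; have E := seteqE eLL'.
have [P1 P0 PD PM PN] := rng_subring psi.
exists 1; split; first by exists 1; rewrite mulr1.
move=> z; split.
- move=> hz; exists z; split; last by rewrite mul1r.
  move: z hz; apply: prodset_ind => //.
  move=> w r hw hr; apply: (PM) => //.
  move: w hw; apply: prodset_ind => //.
  move=> y0 r0 [x [_ ->]] hb; apply: (PM); first by exists x.
  exact: rng_j_psi.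
- move=> [_ [[t ->] ->]]; rewrite mul1r.
  have h1 : forall z, prodset L L' z -> prodset (ext_map psi (rng j) L) (rng psi) (psi z).
    apply: prodset_ind.
    + by rewrite rmorph0; exact: prodset0.
    + by move=> a b ha hb; rewrite rmorphD; apply: prodsetD.
    + move=> x y hx hy; rewrite rmorphM -[psi x]mulr1; apply: prodsetM1; last by exists y.
      by apply: prodsetM1; [exists x|exists 1; rewrite rmorph1].
  have := h1 1; rewrite E rmorph1 => /(_ (ex_intro _ 1 (esym (rmorph1 i)))) h.
  have [_ _ sM] := prodset_submodr (ext_map psi (rng j) L) (subring_submod (rng_subring psi)).
  by rewrite -[psi t]mulr1; apply: sM => //; exists t.
Qed.

Definition span n (f : 'I_n -> TA) : TA -> Prop :=
  fun z => exists c : 'I_n -> A, z = \sum_k f k * i (c k).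

Lemma span_submod n (f : 'I_n -> TA) : submod (rng i) (span f).
Proof.
split.
- by exists (fun _ => 0); rewrite big1 // => k _; rewrite rmorph0 mulr0.
- move=> _ _ [c1 ->] [c2 ->]; exists (fun k => c1 k + c2 k); rewrite -big_split /=.
  by apply: eq_bigr => k _; rewrite rmorphD mulrDr.
- move=> _ _ [a ->] [c ->]; exists (fun k => a * c k); rewrite mulr_sumr.
  by apply: eq_bigr => k _; rewrite rmorphM mulrCA.
Qed.

Lemma span_mem n (f : 'I_n -> TA) k : span f (f k).
Proof.
exists (fun l => (l == k)%:R); rewrite (bigD1 k) //= eqxx rmorph1 mulr1 big1 ?addr0 //.
by move=> l /negbTE ->; rewrite rmorph0 mulr0.
Qed.

Lemma exact3 L : invertible (rng j) L -> principal (rng psi) (prodset L (rng psi)) ->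
  exists L0, invertible (rng i) L0 /\ same_class L (ext_map psi (rng j) L0).
Proof.
move=> [sL [L' [sL' eLL']]] [u [[v huv] eu]].
have E := seteqE eLL'; have EU := seteqE eu.
have [I1 I0 ID IM IN] := rng_subring i.
have [S1 S0 SD SM SN] := rng_subring psi.
have vL : forall l, L l -> rng psi (v * l).
  move=> l hl; have : prodset L (rng psi) l.
    by rewrite -[l]mulr1; apply: prodsetM1 => //; exists 1; rewrite rmorph1.
  rewrite EU => -[_ [[t ->] ->]]; exists t; by rewrite mulrA [v * u]mulrC huv mul1r.
have uL' : forall l', L' l' -> rng psi (u * l').
  move=> l' hl'; have : prodset L (rng psi) u.
    by rewrite EU; exists 1; split; [exists 1; rewrite rmorph1|rewrite mulr1].
  move: u {huv eu EU vL}; apply: prodset_ind.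
  - by rewrite mul0r.
  - by move=> a b ha hb; rewrite mulrDl; apply: (SD).
  - move=> x y hx hy; rewrite mulrAC; apply: (SM) => //; apply: rng_j_psi.
    by rewrite -E; apply: prodsetM1.
have : prodset L L' 1 by rewrite E; exists 1; rewrite rmorph1.
move=> [s [hs e1]].
pose N := size s; pose p (k : 'I_N) := nth (0, 0) s k.
have hp : forall k : 'I_N, L (p k).1 /\ L' (p k).2.
  by move=> k; apply: hs; rewrite /p mem_nth.
have sum1 : \sum_(k < N) (p k).1 * (p k).2 = 1.
  by rewrite e1 (big_nth (0, 0)) big_mkord.
have /fin_all_exists [x0 hx0] : forall k : 'I_N, exists x, psi x = v * (p k).1.
  by move=> k; have [t ht] := vL _ (hp k).1; exists t.
have /fin_all_exists [y0 hy0] : forall k : 'I_N, exists y, psi y = u * (p k).2.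
  by move=> k; have [t ht] := uL' _ (hp k).2; exists t.
pose e := \sum_k x0 k * y0 k.
have pe : psi e = 1.
  transitivity ((u * v) * \sum_k (p k).1 * (p k).2); last by rewrite huv sum1 mulr1.
  rewrite rmorph_sum mulr_sumr; apply: eq_bigr => k _.
  by rewrite rmorphM hx0 hy0 mulrACA [v * u]mulrC.
have [e' he'] := psi_unit pe.
have pe' : psi e' = 1 by rewrite -[psi e']mul1r -pe -rmorphM he' rmorph1.
pose y k := e' * y0 k.
have hy : forall k, psi (y k) = u * (p k).2 by move=> k; rewrite rmorphM pe' mul1r hy0.
have sumxy : \sum_k y k * x0 k = 1.
  rewrite -he' /e mulr_suml; apply: eq_bigr => k _; rewrite /y.
  by rewrite -mulrA mulrC [y0 k * _]mulrC.
pose X : 'M[TA]_(N, 1) := \matrix_(k, _) x0 k.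
pose Y : 'M[TA]_(1, N) := \matrix_(_, l) y l.
pose P := X *m Y.
have YX : Y *m X = 1%:M.
  by apply/matrixP => a b; rewrite !ord1 !mxE -sumxy; apply: eq_bigr => k _; rewrite !mxE.
have PP : P *m P = P by rewrite /P mulmxA -(mulmxA X Y X) YX mulmx1.
have Pkl : forall k l, P k l = x0 k * y l.
  by move=> k l; rewrite !mxE big_ord1 !mxE.
have /fin_all_exists [c hc] : forall q : 'I_N * 'I_N, exists c : A, j (pi c) = psi (P q.1 q.2).
  move=> [k l]; rewrite Pkl rmorphM hx0 hy.
  have : prodset L L' ((p k).1 * (p l).2) by apply: prodsetM1; [exact: (hp k).1|exact: (hp l).2].
  rewrite E => -[b hb]; have [a ha] := hpi.1 b; exists a; rewrite -ha -hb.
  by rewrite mulrACA [v * u]mulrC huv mul1r.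
pose C : 'M[A]_N := \matrix_(k, l) c (k, l).
have jC : forall k l, j (pi (C k l)) = psi (P k l) by move=> k l; rewrite mxE hc.
have hQ : map_mx pi (C *m C) = map_mx pi C.
  apply/matrixP => k l; apply: j_inj; rewrite !mxE (hc (k, l)) -PP mxE !rmorph_sum.
  by apply: eq_bigr => m _; rewrite !rmorphM -!jC.
have nilpi : forall a, pi a = 0 -> exists k, a ^+ k = 0 by move=> a /hpi.2.
have [EA [EE hEA]] := idem_lift nilpi hQ.
pose Em := map_mx i EA.
have E2 : Em *m Em = Em by rewrite -map_mxM EE.
have psiE1 : forall k l, psi (Em k l) = psi (P k l).
  move=> k l; rewrite /Em mxE hpsi -jC.
  by have := congr1 (fun M : 'M[B]_N => M k l) hEA; rewrite /= !mxE => ->.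
have psiE : map_mx psi Em = map_mx psi P.
  by apply/matrixP => k l; rewrite [LHS]mxE [RHS]mxE psiE1.
pose D := Em - P.
have psiD : map_mx psi D = 0 by rewrite map_mxB psiE subrr.
pose w := (Y *m Em *m X) 0 0.
have pw : psi w = 1.
  have -> : psi w = (map_mx psi (Y *m Em *m X)) 0 0 by rewrite mxE.
  rewrite !map_mxM psiE -!map_mxM /P mulmxA YX mul1mx YX map_mx1 mxE //.
have [w' hw'] := psi_unit pw.
have YEX : Y *m Em *m X = w%:M by rewrite {1}[Y *m Em *m X]mx11_scalar.
pose G := w *: Em - Em *m X *m Y *m Em.
have GX : G *m X = 0.
  by rewrite /G mulmxBl -scalemxAl -!mulmxA (mulmxA Y) YEX mul_mx_scalar scalemxAr subrr.
have GE : G *m Em = G.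
  by rewrite /G mulmxBl -scalemxAl E2 -!mulmxA E2.
have GD : G *m D = G.
  by rewrite /D mulmxBr GE /P mulmxA GX mul0mx subr0.
have G0 : G = 0.
  pose dt := \det (1%:M - D).
  have pdt : psi dt = 1 by rewrite -det_map_mx map_mxB map_mx1 psiD subr0 det1.
  have [dt' hdt] := psi_unit pdt.
  have : G *m ((1%:M - D) *m \adj (1%:M - D)) = 0.
    by rewrite mulmxA mulmxBr mulmx1 GD subrr mul0mx.
  rewrite mul_mx_adj mul_mx_scalar -/dt => /(congr1 (fun M => dt' *: M)).
  by rewrite scalerA mulrC hdt scale1r scaler0.
have key : Em *m X *m Y *m Em = w *: Em.
  by apply/eqP; rewrite eq_sym -subr_eq0 -/G G0.
pose x' k := (Em *m X) k 0.
pose y' l := w' * (Y *m Em) 0 l.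
have hxy : forall k l, x' k * y' l = i (EA k l).
  move=> k l; rewrite /x' /y' mulrCA.
  have -> : (Em *m X) k 0 * (Y *m Em) 0 l = (Em *m X *m (Y *m Em)) k l.
    by rewrite [RHS]mxE big_ord1.
  by rewrite mulmxA key mxE mulrA [w' * w]mulrC hw' mul1r mxE.
have hyx : \sum_k x' k * y' k = 1.
  have hw : ((Y *m Em) *m (Em *m X)) 0 0 = w by rewrite mulmxA -(mulmxA Y) E2.
  rewrite mxE in hw; rewrite -hw' -hw mulr_suml; apply: eq_bigr => k _.
  by rewrite /x' /y'; move: ((Em *m X) k 0) ((Y *m Em) 0 k) => a b; ring.
have px' : forall k, psi (x' k) = v * (p k).1.
  move=> k; rewrite -hx0.
  have -> : psi (x' k) = (map_mx psi (Em *m X)) k 0 by rewrite mxE.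
  rewrite map_mxM psiE -map_mxM /P -mulmxA YX mulmx1 !mxE //.
have [sL0 sL0'] := (span_submod x', span_submod y').
have E0 : prodset (span x') (span y') = rng i.
  apply: pext => z; split.
  - move: z; apply: prodset_ind => //.
    move=> _ _ [c1 ->] [c2 ->]; rewrite big_distrl /=; apply: big_ind => //.
    move=> k _; rewrite big_distrr /=; apply: big_ind => // l _.
    by rewrite mulrACA hxy; exists (EA k l * (c1 k * c2 l)); rewrite !rmorphM.
  - move=> [a ->]; rewrite -[i a]mul1r -hyx big_distrl /=; apply: prodset_sum => k _.
    rewrite -mulrA; apply: prodsetM1; first exact: span_mem.
    case: sL0' => _ _ hM; rewrite mulrC; apply: hM; [by exists a|exact: span_mem].
exists (span x'); split.
  split => //; exists (span y'); split => //; by move=> z; rewrite E0.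
exists u; split; first by exists v.
case: (sL) => L0 LD LM.
move=> z; split.
- move=> hz; exists (v * z); split; last by rewrite mulrA huv mul1r.
  rewrite -[z]mul1r -sum1 mulr_suml mulr_sumr; apply: prodset_sum => k _.
  have : prodset L L' (z * (p k).2) by apply: prodsetM1 => //; exact: (hp k).2.
  rewrite E => -[b hb].
  rewrite -mulrA mulrA -px' [(p k).2 * z]mulrC hb; apply: prodsetM1; last by exists b.
  by exists (x' k); split => //; exact: span_mem.
- move=> [m [hm ->]]; move: m hm; apply: prodset_ind.
  + by rewrite mulr0.
  + by move=> a b ha hb; rewrite mulrDr; apply: LD.
  + move=> _ _ [_ [[cc ->] ->]] [b ->]; rewrite rmorph_sum mulr_suml mulr_sumr.
    apply: (submod_sum _ sL) => k _.
    rewrite rmorphM px' hpsi.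
    have -> : u * (v * (p k).1 * j (pi (cc k)) * j b) = (j (pi (cc k) * b)) * (p k).1.
      by rewrite rmorphM !mulrA huv mul1r; move: (j (pi (cc k))) (j b) => q1 q2; ring.
    by apply: LM; [exists (pi (cc k) * b)|exact: (hp k).1].
Qed.

End Main.

Theorem corollary5p6 (A TA B TB : comPzRingType)
  (i : {rmorphism A -> TA}) (pi : {rmorphism A -> B}) (j : {rmorphism B -> TB}) :
  total_frac i -> reduction pi -> total_frac j ->
  exists psi : {rmorphism TA -> TB},
    (forall a, psi (i a) = j (pi a)) /\
    let F1 := ext_map psi (rng j) in
    let F2 := fun L : TB -> Prop => prodset L (rng psi) in
    [/\ class_hom (rng i) (rng j) F1,
        class_hom (rng j) (rng psi) F2 &
        exact_0_C_C_C (rng i) (rng j) (rng psi) F1 F2].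
Proof.
move=> hi hpi hj.
have [psi hpsi] := psi_exists hi hpi hj.
exists psi; split => //.
cbv zeta; split.
- exact (F1_hom hpsi).
- exact (F2_hom hpi hpsi).
- split.
  + exact (exact1 hpi hj hpsi).
  + exact (exact2 hpi hpsi).
  + exact (exact3 hi hpi hj hpsi).
Qed.
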